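(* Fix positive constants $P_a$, $P_J^{\max}$, $G_{aw,f}$, $G_{aw,s}$, $L_{aw}$, $\sigma_w^2$, and fixed realizations $|\tilde h_{aw,f}|^2>0$, $|\tilde h_{aw,s}|^2>0$ of the fading power gains. Let $P_J$ be a random variable uniformly distributed on $[0,P_J^{\max}]$. Define $$T_w^{\mathbb H_0}=P_J G_{aw,s}L_{aw}|\tilde h_{aw,s}|^2+\sigma_w^2,\qquad T_w^{\mathbb H_1}=P_aG_{aw,f}L_{aw}|\tilde h_{aw,f}|^2+P_J G_{aw,s}L_{aw}|\tilde h_{aw,s}|^2+\sigma_w^2 .$$ For a threshold $\tau\in\mathbb R$, Willie decides $\mathbb H_1$ if his statistic exceeds $\tau$ and $\mathbb H_0$ otherwise; let $P_{\rm FA}(\tau)=\Pr(T_w^{\mathbb H_0}>\tau)$, $P_{\rm MD}(\tau)=\Pr(T_w^{\mathbb H_1}<\tau)$ (probabilities over $P_J$), and $P_{e,w}(\tau)=P_{\rm FA}(\tau)+P_{\rm MD}(\tau)$. Set $\lambda_1=P_J^{\max}G_{aw,s}L_{aw}|\tilde h_{aw,s}|^2+\sigma_w^2$ and $\lambda_2=P_aG_{aw,f}L_{aw}|\tilde h_{aw,f}|^2+\sigma_w^2$. Then a threshold $\tau^*$ minimizing $P_{e,w}(\tau)$ lies in $[\lambda_1,\lambda_2]$ if $\lambda_1<\lambda_2$ and in $[\lambda_2,\lambda_1]$ if $\lambda_1\ge\lambda_2$, and the minimum detection error is $$P_{e,w}^*=\begin{cases}0,&\lambda_1<\lambda_2,\\[2pt]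 1-\dfrac{P_aG_{aw,f}|\tilde h_{aw,f}|^2}{P_J^{\max}G_{aw,s}|\tilde h_{aw,s}|^2},&\lambda_1\ge\lambda_2.\end{cases}$$
   Context: Setting: a transmitter Alice has two antenna arrays; the first sends a covert signal with known power $P_a$, the second sends a jamming signal with power $P_J$, which is unknown to the warden Willie and uniform on $[0,P_J^{\max}]$, independently from block to block. $G_{aw,f}$ and $G_{aw,s}$ are the total directivity gains from Alice's first and second arrays to Willie, $L_{aw}$ is the path loss, $\tilde h_{aw,f},\tilde h_{aw,s}$ are fading coefficients (known to Willie and constant over a block), and $\sigma_w^2$ is Willie's noise variance. Willie uses the radiometer statistic $T_w=\frac1n\sum_{i=1}^n|\mathbf y_w(i)|^2$ compared to a threshold $\tau$; in the limit of infinite block length $n\to\infty$, $T_w$ equals $T_w^{\mathbb H_0}$ under hypothesis $\mathbb H_0$ (Alice not transmitting the covert signal) and $T_w^{\mathbb H_1}$ under $\mathbb H_1$ (Alice transmitting), as given in the claim. *)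

(* Defs.v *)
From HB Require Import structures.
From mathcomp Require Import all_boot all_order all_algebra.
From mathcomp Require Import all_classical all_reals all_analysis.
Set Implicit Arguments. Unset Strict Implicit. Unset Printing Implicit Defensive.
Import Order.TTheory GRing.Theory Num.Theory.
Local Open Scope classical_set_scope.
Local Open Scope ring_scope.

(* Willie's radiometer statistic (n -> oo) as a function of the jamming power PJ *)
Definition TwH0 (R : realType) (Gs L hs s2 : R) (PJ : R) : R :=
  PJ * Gs * L * hs + s2.
Definition TwH1 (R : realType) (Pa Gf hf Gs L hs s2 : R) (PJ : R) : R :=
  Pa * Gf * L * hf + PJ * Gs * L * hs + s2.

Definition P_FA (R : realType) (PJmax : R) (hP : 0 < PJmax)
    (Gs L hs s2 : R) (tau : R) : \bar R :=
  uniform_prob hP [set PJ | tau < TwH0 Gs L hs s2 PJ].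
Definition P_MD (R : realType) (PJmax : R) (hP : 0 < PJmax)
    (Pa Gf hf Gs L hs s2 : R) (tau : R) : \bar R :=
  uniform_prob hP [set PJ | TwH1 Pa Gf hf Gs L hs s2 PJ < tau].
Definition P_ew (R : realType) (PJmax : R) (hP : 0 < PJmax)
    (Pa Gf hf Gs L hs s2 : R) (tau : R) : \bar R :=
  (P_FA hP Gs L hs s2 tau + P_MD hP Pa Gf hf Gs L hs s2 tau)%E.

(* Main.v *)
Require Import Defs.
From HB Require Import structures.
From mathcomp Require Import all_boot all_order all_algebra.
From mathcomp Require Import all_classical all_reals all_analysis.
From mathcomp Require Import ring lra.
Import Order.TTheory GRing.Theory Num.Theory.
Local Open Scope classical_set_scope.
Local Open Scope ring_scope.

Set Implicit Arguments.
Section S.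
Variable R : realType.
Local Notation mu := (@lebesgue_measure R).

Lemma up_itv (M : R) (hP : 0 < M) (i : interval R) :
  [set` i] `<=` `[0, M] ->
  uniform_prob hP [set` i] = ((M^-1)%:E * mu [set` i])%E.
Proof.
move=> sub; rewrite /uniform_prob.
rewrite (eq_integral (cst (M^-1)%:E)); last first.
  move=> x; rewrite inE => /sub /=; rewrite in_itv /= /uniform_pdf => ->.
  by rewrite subr0.
by rewrite integral_cst.
Qed.

Lemma up_set0 (M : R) (hP : 0 < M) : uniform_prob hP set0 = 0%E.
Proof. by rewrite /uniform_prob integral_set0. Qed.

Lemma up_split (M : R) (hP : 0 < M) (U : set R) :
  uniform_prob hP U = uniform_prob hP (U `&` `[0, M]).
Proof. by rewrite /uniform_prob integral_uniform_pdf [RHS]integral_uniform_pdf -setIA setIid. Qed.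
End S.

Set Implicit Arguments.
Section S.
Variable R : realType.

Definition clampA (w : R) : R := if w < 0 then 1 else if w < 1 then 1 - w else 0.
Definition clampB (w : R) : R := if w <= 0 then 0 else if w < 1 then w else 1.

Ltac itvt := move=> x /=; rewrite ?in_itv /= ?andbT; 
  repeat match goal with |- is_true (_ && _) -> _ => move/andP => [] end;
  intros; try (apply/andP; split); lra.

Lemma up_gt (M : R) (hP : 0 < M) c :
  uniform_prob hP [set x | c < x] = (clampA (c / M))%:E.
Proof.
rewrite up_split /clampA.
have hM1 : M / M = 1 by rewrite divff // gt_eqF.
case: (ltP c 0) => c0.
  have -> : [set x | c < x] `&` `[0, M] = `[0, M]%classic.
    apply/seteqP; split => x /=; rewrite ?in_itv /=.
      by case.
    move=> /andP[h1 h2]; split => //; lra.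
  rewrite ifT; last by rewrite pmulr_llt0 ?invr_gt0.
  rewrite up_itv // lebesgue_measure_itv /= lte_fin hP -EFinD subr0 -EFinM mulVf //.
  by rewrite gt_eqF.
case: (ltP c M) => cM.
  have -> : [set x | c < x] `&` `[0, M] = `]c, M]%classic.
    apply/seteqP; split => x /=; rewrite ?in_itv /=.
      case => h1 /andP[h2 h3]; apply/andP; split => //.
    move=> /andP[h1 h2]; split => //; apply/andP; split => //; lra.
  rewrite ifF; last by apply/negbTE; rewrite -leNgt divr_ge0 // ltW.
  rewrite ifT; last by rewrite ltr_pdivrMr // mul1r.
  rewrite up_itv; last by itvt.
  rewrite lebesgue_measure_itv /= lte_fin cM -EFinD -EFinM; congr (_%:E).
  by field; rewrite gt_eqF.
have -> : [set x | c < x] `&` `[0, M] = set0.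
  apply/seteqP; split => x /=; rewrite ?in_itv /=; last by [].
  case => h1 /andP[h2 h3]; lra.
rewrite up_set0 ifF; last by apply/negbTE; rewrite -leNgt divr_ge0 // ltW.
by rewrite ifF //; apply/negbTE; rewrite -leNgt ler_pdivlMr // mul1r.
Qed.

Lemma up_lt (M : R) (hP : 0 < M) c :
  uniform_prob hP [set x | x < c] = (clampB (c / M))%:E.
Proof.
rewrite up_split /clampB.
case: (leP c 0) => c0.
  have -> : [set x | x < c] `&` `[0, M] = set0.
    apply/seteqP; split => x /=; rewrite ?in_itv /=; last by [].
    case => h1 /andP[h2 h3]; lra.
  by rewrite up_set0 ifT // pmulr_lle0 ?invr_gt0.
rewrite ifF; last by apply/negbTE; rewrite -ltNge divr_gt0.
case: (leP c M) => cM.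
  have -> : [set x | x < c] `&` `[0, M] = `[0, c[%classic.
    apply/seteqP; split => x /=; rewrite ?in_itv /=.
      case => h1 /andP[h2 h3]; apply/andP; split => //.
    move=> /andP[h1 h2]; split => //; apply/andP; split => //; lra.
  rewrite up_itv; last by itvt.
  rewrite lebesgue_measure_itv /= lte_fin c0 -EFinD -EFinM; congr (_%:E).
  rewrite subr0 mulrC; case: ifP => // /negbT; rewrite -leNgt ler_pdivlMr // mul1r => h.
  have -> : c = M by apply/eqP; rewrite eq_le cM h.
  by rewrite divff // gt_eqF.
have -> : [set x | x < c] `&` `[0, M] = `[0, M]%classic.
  apply/seteqP; split => x /=; rewrite ?in_itv /=.
    by case.
  move=> /andP[h1 h2]; split => //; lra.
rewrite ifF; last by apply/negbTE; rewrite -leNgt ler_pdivlMr // mul1r ltW.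
rewrite up_itv // lebesgue_measure_itv /= lte_fin hP -EFinD subr0 -EFinM mulVf //.
by rewrite gt_eqF.
Qed.
End S.
Arguments clampA {R}.
Arguments clampB {R}.

Lemma real_main (R : realType) (w g : R) : 0 < g ->
  let P := if 1 < g then 0 else 1 - g in
  P <= clampA w + clampB (w - g) /\
  (clampA w + clampB (w - g) = P -> if 1 < g then 1 <= w <= g else g <= w <= 1).
Proof.
move=> g0 P; rewrite /P /clampA /clampB.
case: (ltP 1 g) => h1; case: (ltP w 0) => h2; case: (leP (w - g) 0) => h3;
  try case: (ltP w 1) => h4; try case: (ltP (w - g) 1) => h5;
  (split; [lra | move=> h; apply/andP; split; lra]).
Qed.

Arguments real_main {R}.

Theorem theorem1 (R : realType) (Pa PJmax Gf Gs L s2 hf hs : R)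
  (hPa : 0 < Pa) (hP : 0 < PJmax) (hGf : 0 < Gf) (hGs : 0 < Gs)
  (hL : 0 < L) (hs2 : 0 < s2) (hhf : 0 < hf) (hhs : 0 < hs) :
  let l1 := PJmax * Gs * L * hs + s2 in
  let l2 := Pa * Gf * L * hf + s2 in
  let Pstar := if l1 < l2 then 0 else 1 - (Pa * Gf * hf) / (PJmax * Gs * hs) in
  let in_range := fun tau : R =>
    if l1 < l2 then l1 <= tau <= l2 else l2 <= tau <= l1 in
  (forall tau : R, (Pstar%:E <= P_ew hP Pa Gf hf Gs L hs s2 tau)%E) /\
  (exists tau : R, in_range tau /\ P_ew hP Pa Gf hf Gs L hs s2 tau = Pstar%:E) /\
  (forall tau : R, P_ew hP Pa Gf hf Gs L hs s2 tau = Pstar%:E -> in_range tau).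
Proof.
move=> l1 l2 Pstar in_range.
pose A := Gs * L * hs. pose B := Pa * Gf * L * hf.
have hA : 0 < A by rewrite /A !mulr_gt0.
have hB : 0 < B by rewrite /B !mulr_gt0.
have hK : 0 < A * PJmax by rewrite mulr_gt0.
pose w tau := (tau - s2) / (A * PJmax).
pose g := B / (A * PJmax).
have hg : 0 < g by rewrite divr_gt0.
have hPew : forall tau, P_ew hP Pa Gf hf Gs L hs s2 tau =
    (clampA (w tau) + clampB (w tau - g))%:E.
  move=> tau; rewrite /P_ew /P_FA /P_MD EFinD.
  have -> : [set PJ | tau < TwH0 Gs L hs s2 PJ] = [set x | (tau - s2) / A < x].
    apply/seteqP; split => x /=; rewrite /TwH0 ltr_pdivrMr //;
      have -> : x * Gs * L * hs = x * A by rewrite /A !mulrA.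
      by move=> h; lra.
    by move=> h; lra.
  have -> : [set PJ | TwH1 Pa Gf hf Gs L hs s2 PJ < tau] =
      [set x | x < (tau - s2 - B) / A].
    apply/seteqP; split => x /=; rewrite /TwH1 ltr_pdivlMr //;
      have -> : x * Gs * L * hs = x * A by rewrite /A !mulrA.
      by rewrite -/B => h; lra.
    by rewrite -/B => h; lra.
  rewrite up_gt up_lt; congr (_%:E + _%:E)%E; congr (_ _); rewrite /w /g.
    by field; rewrite !gt_eqF.
  by field; rewrite !gt_eqF.
have e1 : (l1 < l2) = (1 < g).
  rewrite /g ltr_pdivlMr // mul1r /l1 /l2 -/B ltrD2r.
  by rewrite /A [in RHS]mulrC !mulrA.
have eP : Pstar = if 1 < g then 0 else 1 - g.
  rewrite /Pstar e1; case: ifP => // _; congr (_ - _).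
  rewrite /g /B /A; field; rewrite !gt_eqF //.
have eR : forall tau, in_range tau = if 1 < g then 1 <= w tau <= g else g <= w tau <= 1.
  move=> tau; rewrite /in_range e1 /w /g.
  have E1 : (l1 <= tau) = (1 <= (tau - s2) / (A * PJmax)).
    rewrite ler_pdivlMr // mul1r /l1 /A; apply/idP/idP => h.
      have -> : Gs * L * hs * PJmax = PJmax * Gs * L * hs by rewrite mulrC !mulrA.
      lra.
    have e : Gs * L * hs * PJmax = PJmax * Gs * L * hs by rewrite mulrC !mulrA.
    rewrite e in h; lra.
  have E2 : (l2 <= tau) = (B / (A * PJmax) <= (tau - s2) / (A * PJmax)).
    rewrite ler_pM2r ?invr_gt0 // /l2 -/B; apply/idP/idP => h; lra.
  have E3 : (tau <= l1) = ((tau - s2) / (A * PJmax) <= 1).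
    rewrite ler_pdivrMr // mul1r /l1 /A; apply/idP/idP => h.
      have -> : Gs * L * hs * PJmax = PJmax * Gs * L * hs by rewrite mulrC !mulrA.
      lra.
    have e : Gs * L * hs * PJmax = PJmax * Gs * L * hs by rewrite mulrC !mulrA.
    rewrite e in h; lra.
  have E4 : (tau <= l2) = ((tau - s2) / (A * PJmax) <= B / (A * PJmax)).
    rewrite ler_pM2r ?invr_gt0 // /l2 -/B; apply/idP/idP => h; lra.
  by case: ifP => _; rewrite ?E1 ?E2 ?E3 ?E4.
split.
  move=> tau; rewrite hPew eP lee_fin.
  by case: (real_main (w tau) g hg).
split.
  exists l1; rewrite eR hPew eP.
  have -> : w l1 = 1 by rewrite /w /l1 /A; field; rewrite !gt_eqF.
  have [_ ] := real_main 1 g hg.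
  rewrite /clampA /clampB ltxx ltr10.
  case: (ltP 1 g) => h1; rewrite ?ler_subl_addr ?ltrBlDr.
    have h2 : 1 - g <= 0 by lra.
    by rewrite h2 add0r => H; split => //; apply/andP; split; lra.
  have h3 : 1 < 1 + g by lra.
  rewrite h3 add0r => _; split; first by rewrite lexx.
  case: ifPn => h2 //; have -> : 1 - g = 0 by lra.
  by [].
move=> tau; rewrite hPew eP eR => Heq; have H := EFin_inj Heq.
by case: (real_main (w tau) g hg) => _ /(_ H).
Qed.
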